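(* In the setting below, let $A$ be a type over $\Gamma$ with a global element $\mathbf{c}_A:\Phi(\Gamma,A)$, and let $t,s$ be terms of type $A$ in context $\Gamma$. Then there is a global element $\mathbf{c}:\Phi(\Gamma,\mathrm{Path}_A\,t\,s)$, where $\mathrm{Path}_A\,t\,s=\Pi(i:\mathbb{I}).A[(i=0)\mapsto t,(i=1)\mapsto s]$.
   Context: Work in the internal extensional dependent type theory of a presheaf topos containing an object $\mathbb{I}$ which is internally a De Morgan algebra $(0,1,\wedge,\vee,1-\cdot)$ with $0\neq1$ and the disjunction property $i\vee j=1\Rightarrow(i=1\vee j=1)$. $\Omega$ is the type of propositions. $\mathbb{F}=\{p:\Omega\mid\exists i:\mathbb{I}.\ p=(i=1)\}$, a lattice under the operations of $\Omega$; $(i=0)$ denotes the face $((1-i)=1)$. For $\phi:\mathbb{F}$, $[\phi]$ is the subsingleton type $\mathrm{Id}_{\mathbb{F}}(\phi,\top)$. For a type $A$ and partial element $u:[\phi]\to A$, $A[\phi\mapsto u]=\Sigma(a:A).([\phi]\to\mathrm{Id}_A(a,u))$; for faces $\phi_k$ with partial elements $t_k$ agreeing on overlaps, $A[\phi_1\mapsto t_1,\dots,\phi_n\mapsto t_n]$ is $A[\phi_1\vee\dots\vee\phi_n\mapsto t]$ with $t$ the unique partial element equal to $t_k$ on $[\phi_k]$. Contexts $\Gamma$ are treated as closed types; for $\gamma:\mathbb{I}\to\Gamma$, $A(\gamma(i))$ denotes reindexing. The type of compositions is $\Phi(\Gamma,A)=\Pi(\gamma:\mathbb{I}\to\Gamma)(\phi:\mathbb{F})(u:\Pi(i:\mathbb{I}).[\phi]\to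 A(\gamma(i))).\ A(\gamma(0))[\phi\mapsto u(0)]\to A(\gamma(1))[\phi\mapsto u(1)]$. *)

(* Defs.v *)
(* Internal extensional type theory of the topos is
   modelled by Rocq's own type theory: types are Rocq types, Omega = Prop,
   the interval I is an arbitrary type carrying a De Morgan algebra structure. *)

Record DMAlg := {
  dI :> Type;
  d0 : dI;
  d1 : dI;
  dmeet : dI -> dI -> dI;
  djoin : dI -> dI -> dI;
  drev : dI -> dI;
  dmeetA : forall x y z, dmeet x (dmeet y z) = dmeet (dmeet x y) z;
  djoinA : forall x y z, djoin x (djoin y z) = djoin (djoin x y) z;
  dmeetC : forall x y, dmeet x y = dmeet y x;
  djoinC : forall x y, djoin x y = djoin y x;
  dmeet_absorb : forall x y, dmeet x (djoin x y) = x;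
  djoin_absorb : forall x y, djoin x (dmeet x y) = x;
  dmeet_joinDr : forall x y z, dmeet x (djoin y z) = djoin (dmeet x y) (dmeet x z);
  djoin0 : forall x, djoin x d0 = x;
  dmeet1 : forall x, dmeet x d1 = x;
  drevK : forall x, drev (drev x) = x;
  drev_meet : forall x y, drev (dmeet x y) = djoin (drev x) (drev y)
}.

Section Internal.
Variable D : DMAlg.

Definition F : Type := { p : Prop | exists i : dI D, p = (i = d1 D) }.

Definition face1 (i : dI D) : F := exist _ (i = d1 D) (ex_intro _ i eq_refl).
Definition face0 (i : dI D) : F := face1 (drev D i).

Definition topF : F := face1 (d1 D).

Definition Holds (phi : F) : Prop := phi = topF.

Definition Ext (A : Type) (phi : F) (u : Holds phi -> A) : Type :=
  { a : A & forall p : Holds phi, a = u p }.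

Definition Ext2 (A : Type) (phi1 : F) (t1 : Holds phi1 -> A)
                          (phi2 : F) (t2 : Holds phi2 -> A) : Type :=
  { a : A & ((forall p : Holds phi1, a = t1 p) * (forall p : Holds phi2, a = t2 p))%type }.

Definition Phi (Gamma : Type) (A : Gamma -> Type) : Type :=
  forall (gamma : dI D -> Gamma) (phi : F)
         (u : forall i : dI D, Holds phi -> A (gamma i)),
    Ext (A (gamma (d0 D))) phi (u (d0 D)) ->
    Ext (A (gamma (d1 D))) phi (u (d1 D)).

Definition PathT (Gamma : Type) (A : Gamma -> Type) (t s : forall g, A g)
  : Gamma -> Type :=
  fun g => forall i : dI D,
    Ext2 (A g) (face0 i) (fun _ => t g) (face1 i) (fun _ => s g).

End Internal.

(* Main.v *)
Require Import Defs.
From Stdlib Require Import ClassicalEpsilon ProofIrrelevance FunctionalExtensionality PropExtensionality.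

Lemma join1l (D : DMAlg) (x : dI D) : djoin D (d1 D) x = d1 D.
Proof.
  transitivity (djoin D (d1 D) (dmeet D (d1 D) x)).
  - rewrite dmeetC, dmeet1; reflexivity.
  - apply djoin_absorb.
Qed.

Lemma rev1 (D : DMAlg) : drev D (d1 D) = d0 D.
Proof.
  pose proof (drev_meet D (d1 D) (drev D (d0 D))) as H.
  rewrite drevK, djoin0, dmeetC, dmeet1, drevK in H. symmetry; exact H.
Qed.

Lemma Holds_iff (D : DMAlg) (phi : F D) : Holds D phi <-> proj1_sig phi.
Proof.
  destruct phi as [P HP]; unfold Holds, topF, face1; simpl; split.
  - intro H. apply (f_equal (@proj1_sig _ _)) in H. simpl in H. rewrite H. reflexivity.
  - intro p. assert (E : P = (d1 D = d1 D)) by (apply propositional_extensionality; split; auto).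
    subst P. f_equal; apply proof_irrelevance.
Qed.

Definition jF (D : DMAlg)
  (Hdisj : forall i j : dI D, djoin D i j = d1 D -> i = d1 D \/ j = d1 D)
  (phi : F D) (j : dI D) : F D.
Proof.
  refine (exist _ (proj1_sig phi \/ drev D j = d1 D \/ j = d1 D) _).
  destruct phi as [P [i0 Hi]]. simpl. exists (djoin D i0 (djoin D (drev D j) j)).
  subst P. apply propositional_extensionality; split.
  - intros [H|[H|H]]; rewrite H.
    + apply join1l.
    + rewrite join1l, djoinC, join1l; reflexivity.
    + rewrite (djoinC D (drev D (d1 D))), join1l, djoinC, join1l; reflexivity.
  - intro H. destruct (Hdisj _ _ H) as [H1|H1]; [left; exact H1|].
    right. exact (Hdisj _ _ H1).
Defined.

Theorem mainTheorem18 (D : DMAlg)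
  (H01 : d0 D <> d1 D)
  (Hdisj : forall i j : dI D, djoin D i j = d1 D -> i = d1 D \/ j = d1 D)
  (Gamma : Type) (A : Gamma -> Type) (cA : Phi D Gamma A)
  (t s : forall g : Gamma, A g) :
  Phi D Gamma (PathT D Gamma A t s).
Proof.
  intros gamma phi u a0.
  assert (Hpath : forall j, { e : Ext2 D (A (gamma (d1 D))) (face0 D j) (fun _ => t (gamma (d1 D)))
                               (face1 D j) (fun _ => s (gamma (d1 D)))
                    | forall q, projT1 e = projT1 (u (d1 D) q j) }).
  { intro j.
    set (phi' := jF D Hdisj phi j).
    set (u' := fun i (_ : Holds D phi') =>
      match excluded_middle_informative (proj1_sig phi) with
      | left h => projT1 (u i (proj2 (Holds_iff D phi) h) j)
      | right _ => match excluded_middle_informative (drev D j = d1 D) with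
                   | left _ => t (gamma i) | right _ => s (gamma i) end end).
    assert (a0' : Ext D (A (gamma (d0 D))) phi' (u' (d0 D))).
    { exists (projT1 (projT1 a0 j)). intro p. pose proof (proj1 (Holds_iff D phi') p) as p'. unfold phi', jF in p'. simpl in p'.
      unfold u'. destruct (excluded_middle_informative (proj1_sig phi)) as [h|h].
      - destruct a0 as [a0v Ha0]. simpl. rewrite (Ha0 (proj2 (Holds_iff D phi) h)). reflexivity.
      - destruct (projT1 a0 j) as [x [x1 x2]]; simpl.
        destruct (excluded_middle_informative (drev D j = d1 D)) as [h'|h'].
        + apply x1, Holds_iff. exact h'.
        + destruct p' as [p'|[p'|p']]; [contradiction|contradiction|].
          apply x2, Holds_iff. exact p'. }
    destruct (cA gamma phi' u' a0') as [rv Hr].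
    assert (Hp : (proj1_sig phi \/ drev D j = d1 D \/ j = d1 D) -> Holds D phi')
      by (intros; apply Holds_iff; unfold phi', jF; simpl; assumption).
    unshelve eexists (existT _ rv (pair _ _)).
    - intro p0. simpl. apply Holds_iff in p0; simpl in p0.
      rewrite (Hr (Hp (or_intror (or_introl p0)))). unfold u'.
      destruct (excluded_middle_informative (proj1_sig phi)) as [h|h].
      + destruct (u (d1 D) _ j) as [y [y1 y2]]; simpl. apply y1, Holds_iff. exact p0.
      + destruct (excluded_middle_informative (drev D j = d1 D)); [reflexivity|contradiction].
    - intro p0. simpl. apply Holds_iff in p0; simpl in p0.
      rewrite (Hr (Hp (or_intror (or_intror p0)))). unfold u'.
      destruct (excluded_middle_informative (proj1_sig phi)) as [h|h].
      + destruct (u (d1 D) _ j) as [y [y1 y2]]; simpl. apply y2, Holds_iff. exact p0.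
      + destruct (excluded_middle_informative (drev D j = d1 D)) as [h'|h']; [|reflexivity].
        exfalso. apply H01. rewrite p0, rev1 in h'. exact h'.
    - intro q. simpl. pose proof q as q'. apply Holds_iff in q'.
      rewrite (Hr (Hp (or_introl q'))). unfold u'.
      destruct (excluded_middle_informative (proj1_sig phi)) as [h|h]; [|contradiction].
      rewrite (proof_irrelevance _ (proj2 (Holds_iff D phi) h) q). reflexivity. }
  exists (fun j => proj1_sig (Hpath j)).
  intro q. apply functional_extensionality_dep. intro j.
  destruct (Hpath j) as [e He]. simpl. specialize (He q).
  destruct e as [a [h1 h2]]. simpl in He.
  destruct (u (d1 D) q j) as [b [k1 k2]]. simpl in He. subst b.
  f_equal. f_equal; apply proof_irrelevance.
Qed.
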